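(* Let $G$ be a claw-free graph and $C$ an even hole of length $2k$ with $k>2$, labelled $C=\mathbf{b}_0-\mathbf{a}_0-\mathbf{b}_1-\mathbf{a}_1-\dots-\mathbf{b}_{k-1}-\mathbf{a}_{k-1}-\mathbf{b}_0$. Let $\mathbf{s}\notin C$ with $\Gamma_C(\mathbf{s})=\{\mathbf{b}_0,\mathbf{a}_0,\mathbf{b}_1\}$. If a vertex $\mathbf{t}\notin C\cup\{\mathbf{s}\}$ is adjacent to exactly one of $\mathbf{s},\mathbf{a}_0$, then $\mathbf{t}$ is adjacent to exactly one of $\mathbf{b}_0,\mathbf{b}_1$.
   Context: A hole is an induced cycle of length at least 4; an even hole has even length. Claw-free: no induced $K_{1,3}$. $\Gamma_C(\mathbf{s})$ is the set of neighbours of $\mathbf{s}$ in $C$. *)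

(* Defs.v *)
From mathcomp Require Import all_boot.
Set Implicit Arguments. Unset Strict Implicit. Unset Printing Implicit Defensive.

Definition simple_graph (T : finType) (e : rel T) : Prop :=
  symmetric e /\ irreflexive e.

Definition claw_free (T : finType) (e : rel T) : Prop :=
  forall x y1 y2 y3 : T,
    e x y1 -> e x y2 -> e x y3 ->
    y1 != y2 -> y1 != y3 -> y2 != y3 ->
    e y1 y2 || e y1 y3 || e y2 y3.

Definition cyc_adj (n : nat) (i j : 'I_n) : bool :=
  (j == (i.+1 %% n) :> nat) || (i == (j.+1 %% n) :> nat).

Definition induced_cycle (T : finType) (e : rel T) (n : nat) (c : 'I_n -> T) : Prop :=
  injective c /\ forall i j : 'I_n, e (c i) (c j) = cyc_adj i j.

Definition hole (T : finType) (e : rel T) (n : nat) (c : 'I_n -> T) : Prop :=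
  4 <= n /\ induced_cycle e c.

Definition exactly_one (p q : bool) : bool := p (+) q.

(* Main.v *)
Require Import Defs.
From mathcomp Require Import all_boot.
From mathcomp Require Import zify.

Lemma cyc_adjE (n : nat) (i j : 'I_n) : 2 < n ->
  cyc_adj i j = [|| (val j == (val i).+1), (val i == (val j).+1),
     ((val i == n.-1) && (val j == 0)) | ((val j == n.-1) && (val i == 0))].
Proof.
move=> hn; rewrite /cyc_adj.
have hi := ltn_ord i; have hj := ltn_ord j.
have E : forall a, a < n -> a.+1 %% n = if a.+1 == n then 0 else a.+1.
  move=> a ha; case: eqP => [->|h]; first by rewrite modnn.
  by rewrite modn_small //; lia.
rewrite !E //.
move: hi hj; case: i => i /= _; case: j => j /= _ hi hj.
case: ifP => /eqP h1; case: ifP => /eqP h2.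
all: lia.
Qed.

Theorem corollary3 (T : finType) (e : rel T) (k : nat)
  (c : 'I_(2 * k) -> T) (s t : T)
  (Hg : simple_graph e) (Hcf : claw_free e) (Hk : 2 < k)
  (Hhole : hole e c)
  (Hs : forall i : 'I_(2 * k), s != c i)
  (HsN : forall i : 'I_(2 * k), e s (c i) = (val i \in [:: 0; 1; 2]))
  (Ht : forall i : 'I_(2 * k), t != c i) (Hts : t != s)
  (i0 i1 i2 : 'I_(2 * k)) (Hi0 : val i0 = 0) (Hi1 : val i1 = 1) (Hi2 : val i2 = 2)
  (Hta : exactly_one (e t s) (e t (c i1))) :
  exactly_one (e t (c i0)) (e t (c i2)).
Proof.
have hn : 5 < 2 * k by lia.
have h3 : 3 < 2 * k by lia.
have hl : (2 * k).-1 < 2 * k by lia.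
pose i3 := Ordinal h3. pose il := Ordinal hl.
have Hv3 : val i3 = 3 by [].
have Hvl : val il = (2 * k).-1 by [].
case: Hg => Hsym Hirr.
case: Hhole => _ [Hinj Hadj].
have A : forall i j : 'I_(2 * k), e (c i) (c j) = cyc_adj i j := Hadj.
have D : forall i j : 'I_(2 * k), val i != val j -> c i != c j.
  by move=> i j h; rewrite (inj_eq Hinj) -val_eqE.
have ad : forall i j : 'I_(2*k), e (c i) (c j) = _ := fun i j => etrans (A i j) (@cyc_adjE _ i j (ltnW (ltnW (ltnW hn)))).
have n02 : e (c i0) (c i2) = false by rewrite ad Hi0 Hi2; clear -hn; lia.
have nl1 : e (c il) (c i1) = false by rewrite ad Hvl Hi1; clear -hn; lia.
have n13 : e (c i1) (c i3) = false by rewrite ad Hv3 Hi1; clear -hn; lia.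
have nl3 : e (c il) (c i3) = false by rewrite ad Hv3 Hvl; clear -hn; lia.
have a01 : e (c i0) (c i1) by rewrite ad Hi0 Hi1; clear -hn; lia.
have a21 : e (c i2) (c i1) by rewrite ad Hi2 Hi1; clear -hn; lia.
have a23 : e (c i2) (c i3) by rewrite ad Hi2 Hv3; clear -hn; lia.
have a0l : e (c i0) (c il) by rewrite ad Hi0 Hvl; clear -hn; lia.
have s0 : e s (c i0) by rewrite HsN Hi0.
have s1 : e s (c i1) by rewrite HsN Hi1.
have s2 : e s (c i2) by rewrite HsN Hi2.
have sl : e s (c il) = false by rewrite HsN Hvl !inE; clear -hn; lia.
have s3 : e s (c i3) = false by rewrite HsN Hv3.
have d02 : c i0 != c i2 by apply: D; rewrite Hi0 Hi2.
have dl1 : c il != c i1 by apply: D; rewrite Hvl Hi1; clear -hn; lia.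
have d13 : c i1 != c i3 by apply: D; rewrite Hi1 Hv3.
have dl3 : c il != c i3 by apply: D; rewrite Hvl Hv3; clear -hn; lia.
have ts : forall i, t != c i := Ht.
have st : forall i, c i != t := fun i => ltac:(by rewrite eq_sym).
have ss : forall i, c i != s := fun i => ltac:(by rewrite eq_sym).
move: Hta; rewrite /exactly_one.
case Ets: (e t s); case Et1: (e t (c i1)) => //= _.
- (* t ~ s, t !~ a0 *)
  have ct : e t (c i0) || e t (c i2).
    have := Hcf s (c i0) (c i2) t s0 s2 (ltac:(by rewrite Hsym)) d02
      (st _) (st _).
    by rewrite n02 /= ![e _ t]Hsym.
  case E0: (e t (c i0)); case E2: (e t (c i2)) => //=; last by rewrite E0 E2 in ct.
  have tl : e t (c il).
    have := Hcf (c i0) (c il) (c i1) t a0l a01 ltac:(by rewrite Hsym)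
      dl1 (st _) (st _).
    by rewrite nl1 /= ![e _ t]Hsym Et1 orbF.
  have t3 : e t (c i3).
    have := Hcf (c i2) (c i1) (c i3) t a21 a23 ltac:(by rewrite Hsym)
      d13 (st _) (st _).
    by rewrite n13 /= ![e _ t]Hsym Et1 /=.
  have := Hcf t s (c il) (c i3) Ets tl t3 (Hs _) (Hs _) dl3.
  by rewrite sl s3 nl3.
- (* t ~ a0, t !~ s *)
  have ct : e t (c i0) || e t (c i2).
    have := Hcf (c i1) (c i0) (c i2) t ltac:(by rewrite Hsym) ltac:(by rewrite Hsym)
      ltac:(by rewrite Hsym) d02 (st _) (st _).
    by rewrite n02 /= ![e _ t]Hsym.
  case E0: (e t (c i0)); case E2: (e t (c i2)) => //=; last by rewrite E0 E2 in ct.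
  have tl : e t (c il).
    have := Hcf (c i0) (c il) s t a0l ltac:(by rewrite Hsym) ltac:(by rewrite Hsym)
      (ss _) (st _) ltac:(by rewrite eq_sym).
    by rewrite [e (c il) s]Hsym sl /= ![e _ t]Hsym Ets orbF.
  have t3 : e t (c i3).
    have := Hcf (c i2) (c i3) s t a23 ltac:(by rewrite Hsym) ltac:(by rewrite Hsym)
      (ss _) (st _) ltac:(by rewrite eq_sym).
    by rewrite [e (c i3) s]Hsym s3 /= ![e _ t]Hsym Ets orbF.
  have := Hcf t (c il) (c i1) (c i3) tl Et1 t3 dl1 dl3 d13.
  by rewrite nl1 nl3 n13.
Qed.
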